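(* Let $\mathbb{H}\in\{\mathbb{R},\mathbb{C}\}$, let $A\in\mathbb{H}^{M\times N}$ be deterministic, let $x\in\mathbb{H}^N$, $e^z\in\mathbb{H}^M$, $e^y\in\mathbb{R}^M$ be random vectors, let $f:\mathbb{H}\to\mathbb{R}$ be measurable, and $y=f(Ax+e^z)+e^y$ (entrywise $f$). Let $\mathcal{T}:\mathbb{R}\to\mathbb{R}$ be a measurable preprocessing function applied entrywise, assume $\mathbb{E}[\mathcal{T}(y_m)^2]<\infty$ for all $m$ and $\mathbb{E}[\|x\|_2^4]<\infty$. Define $\overline{\mathcal{T}}(y)=\mathbb{E}[\mathcal{T}(y)]$, $K_x=\mathbb{E}[xx^H]$, $T=\mathbb{E}[(\mathcal{T}(y)-\overline{\mathcal{T}}(y))(\mathcal{T}(y)-\overline{\mathcal{T}}(y))^T]$, assume $T$ is full rank, let $t$ solve $Tt=\mathcal{T}(y)-\overline{\mathcal{T}}(y)$, $V_m=\mathbb{E}[(\mathcal{T}(y_m)-\overline{\mathcal{T}}(y_m))(xx^H-K_x)]$, and $D_y=K_x+\sum_{m=1}^Mt_mV_m$. Let $\hat x\in\mathbb{H}^N$ be a minimizer of $\|D_y-\tilde x\tilde x^H\|_F^2$ over $\tilde x\in\mathbb{H}^N$. Then $$\mathbb{E}\big[\|\hat x\hat x^H-xx^H\|_F^2\big]\le 4\,\mathbb{E}\big[\|D_y-xx^H\|_F^2\big].$$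
   Context: Expectations are taken jointly over $x$, $e^z$, $e^y$; $A$ is deterministic. For $\mathbb{H}=\mathbb{R}$, $H$ denotes transpose. $\|\cdot\|_F$ is the Frobenius norm. *)

(* Defs.v *)
From HB Require Import structures.
From mathcomp Require Import all_boot all_order all_algebra.
From mathcomp Require Import all_classical all_reals all_analysis.
From mathcomp Require Import complex.
Set Implicit Arguments. Unset Strict Implicit. Unset Printing Implicit Defensive.
Import Order.TTheory GRing.Theory Num.Theory.
Local Open Scope ring_scope.

Section Defs.
Variable R : realType.
Local Notation C := (complex R).

Definition sqmod (z : C) : R := complex.Re z ^+ 2 + complex.Im z ^+ 2.

Definition adjmx m n (A : 'M[C]_(m, n)) : 'M[C]_(n, m) :=
  (map_mx (@conjc R) A)^T.

Definition frob2 m n (A : 'M[C]_(m, n)) : R :=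
  \sum_(i < m) \sum_(j < n) sqmod (A i j).

Definition outer n (v : 'cV[C]_n) : 'M[C]_n := v *m adjmx v.

(* H = R (realcase = true) viewed inside C, or H = C (realcase = false) *)
Definition inH (realcase : bool) (z : C) : Prop := realcase -> complex.Im z = 0.
Definition inHmx (realcase : bool) m n (A : 'M[C]_(m, n)) : Prop :=
  forall i j, inH realcase (A i j).

Context d (Omega : measurableType d) (P : probability Omega R).

Definition EE (g : Omega -> R) : R := fine (\int[P]_w (g w)%:E)%E.
Definition EC (g : Omega -> C) : C :=
  Complex (EE (fun w => complex.Re (g w))) (EE (fun w => complex.Im (g w))).

Definition rvC (g : Omega -> C) : Prop :=
  measurable_fun setT (fun w => complex.Re (g w)) /\
  measurable_fun setT (fun w => complex.Im (g w)).
Definition rvCmx m n (X : Omega -> 'M[C]_(m, n)) : Prop :=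
  forall i j, rvC (fun w => X w i j).
Definition rvRmx m n (X : Omega -> 'M[R]_(m, n)) : Prop :=
  forall i j, measurable_fun setT (fun w => X w i j).

End Defs.

Definition measurable_cplx (R : realType) (f : complex R -> R) : Prop :=
  measurable_fun setT (fun p : R * R => f (Complex p.1 p.2)).

(* Main.v *)
Require Import Defs.
From HB Require Import structures.
From mathcomp Require Import all_boot all_order all_algebra.
From mathcomp Require Import all_classical all_reals all_analysis.
From mathcomp Require Import complex.
From mathcomp Require Import lra.
Import Order.TTheory GRing.Theory Num.Theory.
Local Open Scope ring_scope.

Lemma nm_le_integral d (T : measurableType d) (R : realType)
  (mu : {measure set T -> \bar R}) (f g : T -> \bar R) :
  (forall x, (0 <= f x)%E) -> (forall x, (f x <= g x)%E) ->
  (\int[mu]_x f x <= \int[mu]_x g x)%E.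
Proof.
move=> f0 fg.
have g0 x : (0 <= g x)%E by apply: le_trans (f0 x) (fg x).
rewrite !ge0_integralTE//.
apply: ereal_sup_le => _ [h hf <-]; exists h => //= x.
exact: le_trans (hf x) (fg x).
Qed.

Section C.
Variable R : realType.
Implicit Types u v : complex R.
Lemma ReD u v : complex.Re (u + v) = complex.Re u + complex.Re v.
Proof. by case: u; case: v. Qed.
Lemma ImD u v : complex.Im (u + v) = complex.Im u + complex.Im v.
Proof. by case: u; case: v. Qed.
Lemma ReN u : complex.Re (- u) = - complex.Re u.
Proof. by case: u. Qed.
Lemma ImN u : complex.Im (- u) = - complex.Im u.
Proof. by case: u. Qed.
Lemma ReM u v : complex.Re (u * v) = complex.Re u * complex.Re v - complex.Im u * complex.Im v.
Proof. by case: u; case: v. Qed.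
Lemma ImM u v : complex.Im (u * v) = complex.Re u * complex.Im v + complex.Im u * complex.Re v.
Proof. by case: u; case: v. Qed.
Lemma Reconj u : complex.Re (conjc u) = complex.Re u.
Proof. by case: u. Qed.
Lemma Imconj u : complex.Im (conjc u) = - complex.Im u.
Proof. by case: u. Qed.
Lemma sqmod_ge0 u : 0 <= sqmod u.
Proof. by rewrite /sqmod addr_ge0 // sqr_ge0. Qed.
Lemma sqmod_tri u v c : sqmod (u - v) <= 2 * sqmod (u - c) + 2 * sqmod (c - v).
Proof.
case: u => a b; case: v => a' b'; case: c => e e'.
rewrite /sqmod /=.
have h1 : forall p q r : R, (p - q) ^+ 2 <= 2 * (p - r) ^+ 2 + 2 * (r - q) ^+ 2 by move=> p q r; have := sqr_ge0 (p - 2 * r + q); nra.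
have := h1 a a' e; have := h1 b b' e'. lra.
Qed.
Lemma sqmodN u : sqmod (- u) = sqmod u.
Proof. by case: u => a b; rewrite /sqmod /= !sqrrN. Qed.
End C.
Section Fr.
Variable R : realType.
Local Notation C := (complex R).
Lemma frob2_ge0 m n (A : 'M[C]_(m, n)) : 0 <= frob2 A.
Proof. by apply: sumr_ge0 => i _; apply: sumr_ge0 => j _; exact: sqmod_ge0. Qed.
Lemma frob2_tri m n (A B Cm : 'M[C]_(m, n)) :
  frob2 (A - B) <= 2 * frob2 (A - Cm) + 2 * frob2 (Cm - B).
Proof.
rewrite /frob2 !mulr_sumr -big_split /=; apply: ler_sum => i _.
rewrite !mulr_sumr -big_split /=; apply: ler_sum => j _.
rewrite !mxE; exact: sqmod_tri.
Qed.
Lemma frob2N m n (A B : 'M[C]_(m, n)) : frob2 (A - B) = frob2 (B - A).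
Proof.
rewrite /frob2; apply: eq_bigr => i _; apply: eq_bigr => j _.
by rewrite !mxE -opprB sqmodN.
Qed.
End Fr.

Section Meas.
Variables (R : realType) (d : measure_display) (Omega : measurableType d).
Local Notation C := (complex R).
Implicit Types g h : Omega -> C.
Lemma rvC_add g h : rvC g -> rvC h -> rvC (fun w => g w + h w).
Proof.
move=> [g1 g2] [h1 h2]; split.
- rewrite (_ : (fun w => _) = (fun w => complex.Re (g w) + complex.Re (h w))).
    exact: measurable_realfun.measurable_funD.
  by apply/funext => w; rewrite ReD.
- rewrite (_ : (fun w => _) = (fun w => complex.Im (g w) + complex.Im (h w))).
    exact: measurable_realfun.measurable_funD.
  by apply/funext => w; rewrite ImD.
Qed.
Lemma rvC_opp g : rvC g -> rvC (fun w => - g w).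
Proof.
move=> [g1 g2]; split.
- rewrite (_ : (fun w => _) = (fun w => - complex.Re (g w))).
    exact: measurableT_comp.
  by apply/funext => w; rewrite ReN.
- rewrite (_ : (fun w => _) = (fun w => - complex.Im (g w))).
    exact: measurableT_comp.
  by apply/funext => w; rewrite ImN.
Qed.
Lemma rvC_mul g h : rvC g -> rvC h -> rvC (fun w => g w * h w).
Proof.
move=> [g1 g2] [h1 h2]; split.
- rewrite (_ : (fun w => _) = (fun w => complex.Re (g w) * complex.Re (h w)
     - complex.Im (g w) * complex.Im (h w))).
    by apply: measurable_realfun.measurable_funB; apply: measurable_realfun.measurable_funM.
  by apply/funext => w; rewrite ReM.
- rewrite (_ : (fun w => _) = (fun w => complex.Re (g w) * complex.Im (h w)
     + complex.Im (g w) * complex.Re (h w))).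
    by apply: measurable_realfun.measurable_funD; apply: measurable_realfun.measurable_funM.
  by apply/funext => w; rewrite ImM.
Qed.
Lemma rvC_conj g : rvC g -> rvC (fun w => conjc (g w)).
Proof.
move=> [g1 g2]; split.
- rewrite (_ : (fun w => _) = (fun w => complex.Re (g w))) //.
  by apply/funext => w; rewrite Reconj.
- rewrite (_ : (fun w => _) = (fun w => - complex.Im (g w))).
    exact: measurableT_comp.
  by apply/funext => w; rewrite Imconj.
Qed.
Lemma rvC_sum n (F : 'I_n -> Omega -> C) : (forall k, rvC (F k)) ->
  rvC (fun w => \sum_(k < n) F k w).
Proof.
move=> hF; split.
- rewrite (_ : (fun w => _) = (fun w => \sum_(k < n) complex.Re (F k w))).
    by apply: measurable_sum => k; case: (hF k).
  apply/funext => w; elim/big_rec2: _ => // k a b _ IH; by rewrite ReD IH.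
- rewrite (_ : (fun w => _) = (fun w => \sum_(k < n) complex.Im (F k w))).
    by apply: measurable_sum => k; case: (hF k).
  apply/funext => w; elim/big_rec2: _ => // k a b _ IH; by rewrite ImD IH.
Qed.
Lemma sqmod_meas g : rvC g -> measurable_fun setT (fun w => sqmod (g w)).
Proof.
move=> [g1 g2]; rewrite /sqmod.
by apply: measurable_realfun.measurable_funD; apply: measurable_realfun.measurable_funX.
Qed.
Lemma rv_frob2_outer n (a b : Omega -> 'cV[C]_n) : rvCmx a -> rvCmx b ->
  measurable_fun setT (fun w => frob2 (outer (a w) - outer (b w))).
Proof.
move=> ra rb; rewrite /frob2.
apply: measurable_sum => i; apply: measurable_sum => j.
apply: sqmod_meas.
rewrite (_ : (fun w => _) = (fun w => \sum_(k < 1) (a w i k * conjc (a w j k))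
   + - \sum_(k < 1) (b w i k * conjc (b w j k)))).
  apply: rvC_add; last apply: rvC_opp; apply: rvC_sum => k;
    apply: rvC_mul => //; apply: rvC_conj => //.
apply/funext => w; rewrite /outer /adjmx !mxE.
by congr (_ - _); apply: eq_bigr => k _; rewrite !mxE.
Qed.
End Meas.

Theorem corollary1 (R : realType) (d : measure_display) (Omega : measurableType d)
    (P : probability Omega R) (realcase : bool) (M N : nat)
    (A : 'M[complex R]_(M, N))
    (x : Omega -> 'cV[complex R]_N) (ez : Omega -> 'cV[complex R]_M)
    (ey : Omega -> 'cV[R]_M)
    (f : complex R -> R) (Tc : R -> R)
    (t : Omega -> 'cV[R]_M) (xh : Omega -> 'cV[complex R]_N) :
  inHmx realcase A ->
  (forall w, inHmx realcase (x w)) ->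
  (forall w, inHmx realcase (ez w)) ->
  rvCmx x -> rvCmx ez -> rvRmx ey ->
  measurable_cplx f -> measurable_fun setT Tc ->
  let y : Omega -> 'cV[R]_M :=
    fun w => \col_m (f ((A *m x w + ez w) m ord0) + ey w m ord0) in
  (forall m : 'I_M, (\int[P]_w ((Tc (y w m ord0)) ^+ 2)%:E < +oo)%E) ->
  (\int[P]_w ((\sum_(i < N) sqmod (x w i ord0)) ^+ 2)%:E < +oo)%E ->
  let Tbar : 'cV[R]_M := \col_m EE P (fun w => Tc (y w m ord0)) in
  let ctr : Omega -> 'cV[R]_M := fun w => \col_m (Tc (y w m ord0) - Tbar m ord0) in
  let Kx : 'M[complex R]_N := \matrix_(i, j) EC P (fun w => outer (x w) i j) in
  let Tm : 'M[R]_M := \matrix_(i, j) EE P (fun w => ctr w i ord0 * ctr w j ord0) in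
  \rank Tm = M ->
  (forall w, Tm *m t w = ctr w) ->
  let V : 'I_M -> 'M[complex R]_N := fun m =>
    \matrix_(i, j) EC P (fun w => (ctr w m ord0)%:C%C * (outer (x w) i j - Kx i j)) in
  let D : Omega -> 'M[complex R]_N := fun w =>
    Kx + \sum_(m < M) (t w m ord0)%:C%C *: V m in
  rvCmx xh ->
  (forall w, inHmx realcase (xh w) /\
     forall xt : 'cV[complex R]_N, inHmx realcase xt ->
       frob2 (D w - outer (xh w)) <= frob2 (D w - outer xt)) ->
  (\int[P]_w (frob2 (outer (xh w) - outer (x w)))%:E
     <= 4%:E * \int[P]_w (frob2 (D w - outer (x w)))%:E)%E.
Proof.
move=> hA hx hez rx rez rey mf mTc y hT hx4 Tbar ctr Kx Tm rk ht V D rxh hmin.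
set g := fun w => frob2 (outer (xh w) - outer (x w)).
set h := fun w => frob2 (D w - outer (x w)).
have pt w : g w <= 4 * h w.
  have [_ m] := hmin w; have := m (x w) (hx w).
  have := frob2_tri _ _ _ (outer (xh w)) (outer (x w)) (D w).
  rewrite /g /h [frob2 (outer (xh w) - D w)]frob2N; lra.
have mg : measurable_fun setT g by exact: rv_frob2_outer.
rewrite (_ : (fun w => (g w)%:E) = fun w => 4%:E * ((g w / 4)%:E))%E; last first.
  by apply/funext => w; rewrite -EFinM mulrC divfK.
rewrite ge0_integralZl_EFin //; last 2 first.
- by move=> w _; rewrite lee_fin divr_ge0 // frob2_ge0.
- by apply/measurable_realfun.measurable_EFinP; apply: measurable_realfun.measurable_funM.
apply: lee_wpmul2l => //.
apply: nm_le_integral => w; first by rewrite lee_fin divr_ge0 // frob2_ge0.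
by rewrite lee_fin ler_pdivrMr // mulrC.
Qed.
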